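(* Let $h=0$ and let $x$ be a piecewise constant functional order parameter as in the context, with $1-\lambda+\beta^2Q>0$ and $\beta^2\sigma^2(Q)\int_q^Qx(q')\,dq'<1$ for all $q\in[0,Q]$. Then for every $N$, $$\varphi_N(0;x)=\log\sigma(Q)+f(0,0;x),$$ where $f(\cdot,\cdot;x)$ is the solution of the Parisi equation $\partial_qf+\frac12\big(\partial_y^2f+x(q)(\partial_yf)^2\big)=0$ on $[0,Q]\times\mathbb R$ with final condition $f(Q,y)=\frac{\beta^2}{2}\sigma^2(Q)y^2$, i.e. $f(Q,y)=\frac{\beta^2}{2}\sigma^2(Q)y^2$ and, for $a=K,\dots,1$ and $q\in[q_{a-1},q_a]$, $$f(q,y)=\frac1{m_a}\log\mathbb E_g\exp\big(m_a f(q_a,y+\sqrt{q_a-q}\,g)\big)\quad(\text{resp. } f(q,y)=\mathbb E_g f(q_a,y+\sqrt{q_a-q}\,g)\text{ if } m_a=0),$$ with $g\sim\mathcal N(0,1)$.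
   Context: Fix $\beta>0$, $\lambda\in\mathbb R$, $h=0$. A piecewise constant functional order parameter $x$ is given by an integer $K\ge1$ and numbers $0=q_0\le q_1\le\dots\le q_K=Q$, $0\le m_1\le\dots\le m_K\le1$, with $x(q)=m_a$ for $q\in[q_{a-1},q_a)$. $\sigma(Q)=(1-\lambda+\beta^2Q)^{-1/2}$. Let $J_{ij}$ ($1\le i,j\le N$) and $J^a_i$ ($a=1,\dots,K$, $i=1,\dots,N$) be independent i.i.d. $\mathcal N(0,1)$; $\mathbb E_0$ is expectation over $J$, $\mathbb E_a$ over $(J^a_i)_i$. With $\mathbb E_z$ integration against the standard Gaussian measure on $\mathbb R^N$ and $C=-\beta^2Q$, for $t\in[0,1]$ $$\tilde Z_N(t;x)=\mathbb E_z\exp\Big(\beta\sqrt{\tfrac{t}{2N}}\sum_{i,j}J_{ij}z_iz_j-\tfrac{t\beta^2}{4N}\big(\textstyle\sum_iz_i^2\big)^2+\beta\sqrt{1-t}\sum_{a=1}^K\sqrt{q_a-q_{a-1}}\sum_iJ^a_iz_i+\tfrac{(1-t)C}{2}\sum_iz_i^2+\tfrac\lambda2\sum_iz_i^2\Big).$$ Set $Z_K=\tilde Z_N$, $Z_{a-1}=(\mathbb E_aZ_a^{m_a})^{1/m_a}$ for $a=K,\dots,1$ (with $Z_{a-1}=\exp\mathbb E_a\log Z_a$ if $m_a=0$), and $\varphi_N(t;x)=\frac1N\mathbb E_0\log Z_0$. *)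

(* Defs.v *)
From Stdlib Require Import Reals Lra ClassicalEpsilon.
Open Scope R_scope.

Definition is_imp_int (f : R -> R) (l : R) : Prop :=
  forall eps, 0 < eps -> exists M, forall a b, a <= -M -> M <= b ->
    exists pr : Riemann_integrable f a b, Rabs (RiemannInt pr - l) < eps.

(* The improper integral (chosen by classical choice; 0 if it does not exist). *)
Definition imp_int (f : R -> R) : R :=
  epsilon (inhabits 0) (fun l => is_imp_int f l).

Definition gauss_density (g : R) : R := exp (- (g * g) / 2) / sqrt (2 * PI).

Definition Eg (F : R -> R) : R := imp_int (fun g => gauss_density g * F g).

(* Standard Gaussian expectation on R^n (coordinates 0..n-1), as iterated
   one-dimensional Gaussian integrals. Vectors are functions nat -> R. *)
Fixpoint Evec (n : nat) (F : (nat -> R) -> R) : R :=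
  match n with
  | O => F (fun _ => 0)
  | S n' => Eg (fun g => Evec n' (fun z => F (fun i => if Nat.eqb i n' then g else z i)))
  end.

(* Gaussian expectation over an N x N matrix of iid N(0,1) (rows 0..r-1). *)
Fixpoint Emat (N r : nat) (F : (nat -> nat -> R) -> R) : R :=
  match r with
  | O => F (fun _ _ => 0)
  | S r' => Evec N (fun g => Emat N r' (fun J => F (fun i j => if Nat.eqb i r' then g j else J i j)))
  end.

Fixpoint rsum (n : nat) (f : nat -> R) : R :=
  match n with O => 0 | S n' => rsum n' f + f n' end.

Definition Reqb (x y : R) : bool :=
  if Req_dec_T x y then true else false.

(* A piecewise constant order parameter is given by K, q : nat -> R
   (q 0 = 0 <= q 1 <= ... <= q K = Q) and m : nat -> R (m 1 <= ... <= m K). *)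

Fixpoint srch_lt (q : nat -> R) (qv : R) (a fuel : nat) : nat :=
  match fuel with
  | O => a
  | S f => if Rlt_dec qv (q a) then a else srch_lt q qv (S a) f
  end.

(* x(q') = m_a for q' in [q_{a-1}, q_a) (and m_K for q' >= Q). *)
Definition xfun (K : nat) (q m : nat -> R) (qv : R) : R :=
  m (srch_lt q qv 1 (K - 1)).

Definition sigmaQ (beta lam Q : R) : R := / sqrt (1 - lam + beta ^ 2 * Q).

(* J : the N x N couplings J_{ij} (indices 0..N-1);
   Js a i = J^a_i for a = 1..K, i = 0..N-1. *)
Definition Hint (N K : nat) (q : nat -> R) (beta lam t : R)
  (J Js : nat -> nat -> R) (z : nat -> R) : R :=
  let Q := q K in
  let C := - beta ^ 2 * Q in
  let nN := INR N in
  let sz := rsum N (fun i => z i * z i) in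
  beta * sqrt (t / (2 * nN)) * rsum N (fun i => rsum N (fun j => J i j * z i * z j))
  - t * beta ^ 2 / (4 * nN) * sz ^ 2
  + beta * sqrt (1 - t) *
      rsum K (fun a => sqrt (q (S a) - q a) * rsum N (fun i => Js (S a) i * z i))
  + (1 - t) * C / 2 * sz
  + lam / 2 * sz.

Definition Ztilde (N K : nat) (q : nat -> R) (beta lam t : R) (J Js : nat -> nat -> R) : R :=
  Evec N (fun z => exp (Hint N K q beta lam t J Js z)).

(* Zlev j = Z_{K-j}: Z_K = Ztilde, Z_{a-1} = (E_a Z_a^{m_a})^{1/m_a},
   resp. exp (E_a log Z_a) if m_a = 0. *)
Fixpoint Zlev (N K : nat) (q m : nat -> R) (beta lam t : R) (j : nat)
  : (nat -> nat -> R) -> (nat -> nat -> R) -> R :=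
  match j with
  | O => fun J Js => Ztilde N K q beta lam t J Js
  | S j' => fun J Js =>
      let a := (K - j')%nat in
      let Fa := fun g : nat -> R =>
        Zlev N K q m beta lam t j' J (fun b i => if Nat.eqb b a then g i else Js b i) in
      if Reqb (m a) 0 then exp (Evec N (fun g => ln (Fa g)))
      else Rpower (Evec N (fun g => Rpower (Fa g) (m a))) (/ m a)
  end.

Definition phiN (N K : nat) (q m : nat -> R) (beta lam t : R) : R :=
  / INR N * Emat N N (fun J => ln (Zlev N K q m beta lam t K J (fun _ _ => 0))).

(* f(qv, y) computed from f(q_a, .) on [q_{a-1}, q_a] *)
Definition parisi_step (ma qa qv : R) (fa : R -> R) (y : R) : R :=
  if Reqb ma 0 then Eg (fun g => fa (y + sqrt (qa - qv) * g))
  else / ma * ln (Eg (fun g => exp (ma * fa (y + sqrt (qa - qv) * g)))).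

(* fdown j = f(q_{K-j}, .) *)
Fixpoint fdown (K : nat) (q m : nat -> R) (beta lam : R) (j : nat) : R -> R :=
  match j with
  | O => fun y => beta ^ 2 / 2 * (sigmaQ beta lam (q K)) ^ 2 * y ^ 2
  | S j' => fun y =>
      let a := (K - j')%nat in
      parisi_step (m a) (q a) (q (a - 1)%nat) (fdown K q m beta lam j') y
  end.

Fixpoint srch_le (q : nat -> R) (qv : R) (a fuel : nat) : nat :=
  match fuel with
  | O => a
  | S f => if Rle_dec qv (q a) then a else srch_le q qv (S a) f
  end.

Definition parisi_f (K : nat) (q m : nat -> R) (beta lam : R) (qv y : R) : R :=
  let a := srch_le q qv 1 (K - 1) in
  parisi_step (m a) (q a) qv (fdown K q m beta lam (K - a)) y.

(* Main.v *)
Require Import Defs.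
From Stdlib Require Import Reals.
Open Scope R_scope.
From Stdlib Require Import Lra Lia ClassicalEpsilon FunctionalExtensionality.
From mathcomp Require all_boot all_order all_algebra.
From mathcomp Require all_classical all_reals all_analysis.
From mathcomp Require Rstruct Rstruct_topology.

Module MCB.
From mathcomp Require Import all_boot all_order all_algebra.
From mathcomp Require Import all_classical all_reals all_analysis.
From mathcomp Require Import Rstruct Rstruct_topology.
Import Order.TTheory GRing.Theory Num.Theory.
Import numFieldNormedType.Exports.
Local Open Scope classical_set_scope.
Local Open Scope ring_scope.

Lemma RcosE (x : R) : Rtrigo_def.cos x = cos x.
Proof.
rewrite /Rtrigo_def.cos; case: exist_cos => y.
rewrite /cos_in /infinite_sum => H.
have Hc : (series (cos_coeff' x) : nat -> R^o) @ \oo --> (y : R^o).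
  rewrite -cvg_shiftS /=; apply/cvgrPdist_lt => /= e /RltP /H[N NH].
  near=> n.
  have nN : (n >= N)%coq_nat by apply/ssrnat.leP; near: n; exact: nbhs_infty_ge.
  move: NH => /(_ _ nN) /[!RdistE] /RltP /=.
  rewrite distrC sum_f_R0E; congr (`| _ - _ | < e).
  apply: eq_bigr=> k _; rewrite /cos_coeff' /cos_n.
  rewrite RdivE RpowE INRE factE -mul2n.
  rewrite /Rsqr RpowE. have -> : (x * x)%coqR = x ^+ 2 by rewrite expr2.
  rewrite -exprM mulnC mulrAC.
  have -> : ((2 * k)%coq_nat = k * 2)%N by rewrite mulnC. by [].
exact: (cvg_unique _ Hc (@cvg_cos_coeff' R x)).
Unshelve. all: by end_near. Qed.

Lemma R2E : (2%:R : R) = 2%coqR.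
Proof. rewrite -INRE /=; lra. Qed.

Lemma RpiE : pi = PI.
Proof.
have h : (pi / 2 = PI / 2)%R.
  rewrite pihalfE; apply: get_unique.
    split; last by rewrite -RcosE cos_PI2.
    have := PI2_3_2; have := PI_4 => h1 h2.
    apply/andP; split; apply/RleP; rewrite R2E -?RinvE -?RmultE -?R0E; lra.
  move=> y [/andP[/RleP y0 /RleP y2] cy]; rewrite -RcosE in cy.
  rewrite R2E in y2; rewrite -?R0E in y0.
  have := PI2_3_2 => h1.
  case: (Rtotal_order y (PI/2)) => [yl|[//|yg]].
    have := cos_gt_0 y ltac:(lra) yl; rewrite cy => /Rlt_irrefl [].
  have := cos_lt_0 y yg ltac:(lra); rewrite cy => /Rlt_irrefl [].
rewrite R2E in h.
have := h; rewrite -?RinvE -?RmultE => h'.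
apply: (Rmult_eq_reg_r (/ 2)%coqR); first exact: h'.
apply: Rinv_neq_0_compat; lra.
Qed.
Lemma deriv_bridge (F : R^o -> R^o) (x : R^o) : derivable F x 1 ->
  derivable_pt_lim F x (derive1 F x).
Proof.
move=> dF; rewrite derive1E.
move: dF; rewrite /derivable /derive => dF.
move=> e /RltP e0.
have := (proj1 (cvgrPdist_lt _ _) dF) e e0.
move=> /(_ ltac:(typeclasses eauto)).
rewrite /prop_near1 /= => /nbhs_ballP [r /= r0 Hr].
have r0' : (0 < r)%coqR by apply/RltP.
exists (mkposreal r r0') => h h0 hr.
have /= := Hr h.
have hb : ball (0:R^o) r h by rewrite /ball /= sub0r normrN -RabsE; apply/RltP.
have hn : h != 0 by apply/eqP.
move=> /(_ hb hn); rewrite RabsE distrC.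
rewrite /GRing.scale /= mulr1 (addrC h x) mulrC.
by move/RltP.
Qed.

Lemma gauss_bridge : exists F : R -> R,
  (forall x, (0 < x)%coqR -> derivable_pt_lim F x (Rtrigo_def.exp (- (x * x)))) /\
  (forall x, (0 <= x)%coqR -> (0 <= F x)%coqR /\ (F x <= x)%coqR) /\
  (forall e, (0 < e)%coqR -> exists M, forall x, (M < x)%coqR ->
      (Rabs (F x * F x - PI / 4) < e)%coqR).
Proof.
exists (gauss_integral_proof.integral0_gauss (R:=R)). split; [|split].
- move=> x /RltP x0.
  have xu : x < x + 1 by rewrite ltrDl.
  have ax : (BLeft (GRing.zero : R) < BRight x)%E by rewrite /= lte_fin.
  have ig : lebesgue_measure.-integrable [set` Interval (BLeft (GRing.zero : R)) (BRight (x+1))] (EFin \o (@gauss_fun R)).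
    apply: continuous_compact_integrable => //; first exact: segment_compact.
    by apply: continuous_subspaceT; exact: continuous_gauss_fun.
  have cg : {for x, continuous (@gauss_fun R)} by move=> ?; exact: continuous_gauss_fun.
  have [d e] := @continuous_FTC1 R gauss_fun (BLeft (GRing.zero:R)) x (x+1) xu ig ax cg.
  have := @deriv_bridge _ _ d. rewrite e /gauss_fun -RexpE.
  have -> : x ^+ 2 = (x*x)%coqR by rewrite expr2.
  by [].
- move=> x /RleP x0; split; first by apply/RleP; exact: gauss_integral_proof.integral0_gauss_ge0.
  apply/RleP.
  rewrite /gauss_integral_proof.integral0_gauss.
  apply: (@le_trans _ _ (\int[lebesgue_measure]_(t in `[(GRing.zero:R), x]) (cst (GRing.one R) t))).
    apply: le_Rintegral => //.
    + apply: continuous_compact_integrable => //; first exact: segment_compact.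
      by apply: continuous_subspaceT; exact: continuous_gauss_fun.
    + apply: continuous_compact_integrable => //; first exact: segment_compact.
      by apply: continuous_subspaceT; exact: cst_continuous.
    + move=> t _; exact: gauss_fun_le1.
  rewrite Rintegral_cst //.
  have := @lebesgue_measure_itv R `[(GRing.zero:R), x]%R.
  rewrite /= => ->; rewrite lte_fin.
  case: ifP => _; last by rewrite /= mulr0.
  by rewrite /= subr0 mul1r.
- move=> e /RltP e0.
  have := proj1 (cvgrPdist_lt _ _) (gauss_integral_proof.cvg_integral0_gauss_sqr (R:=R)) e e0.
  case=> M [_ HM]. exists M => x /RltP xM.
  have H := HM x xM. apply/RltP.
  have R4E : (4%:R : R) = 4%coqR by rewrite -INRE /=; lra.
  rewrite -R4E -RpiE RabsE distrC.
  move: H; rewrite expr2. by [].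
Qed.

End MCB.

From Coquelicot Require Import Coquelicot.
Open Scope R_scope.

Definition IMP (f : R -> R) (l : R) : Prop :=
  (forall a b, ex_RInt f a b) /\
  forall eps, 0 < eps -> exists M, forall a b, a <= -M -> M <= b ->
    Rabs (RInt f a b - l) < eps.

Lemma IMP_is_imp_int f l : IMP f l -> is_imp_int f l.
Proof.
intros [Hex H] eps He. destruct (H eps He) as [M HM].
exists M. intros a b Ha Hb.
exists (ex_RInt_Reals_0 f a b (Hex a b)).
rewrite <- RInt_Reals. now apply HM.
Qed.

Lemma is_imp_int_unique f l1 l2 : is_imp_int f l1 -> is_imp_int f l2 -> l1 = l2.
Proof.
intros H1 H2.
destruct (Req_dec l1 l2) as [e|ne]; [exact e|exfalso].
assert (Hd : 0 < Rabs (l1 - l2)) by (apply Rabs_pos_lt; lra).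
set (eps := Rabs (l1 - l2) / 2).
assert (He : 0 < eps) by (unfold eps; lra).
destruct (H1 eps He) as [M1 HM1]. destruct (H2 eps He) as [M2 HM2].
set (M := Rmax (Rmax M1 M2) 0).
assert (m1 : M1 <= M) by (unfold M; eauto using Rmax_l, Rmax_r, Rle_trans).
assert (m2 : M2 <= M) by (unfold M; eauto using Rmax_l, Rmax_r, Rle_trans).
destruct (HM1 (-M) M ltac:(lra) ltac:(lra)) as [p1 A1].
destruct (HM2 (-M) M ltac:(lra) ltac:(lra)) as [p2 A2].
rewrite (RiemannInt_P5 p1 p2) in A1.
assert (Rabs (l1 - l2) <= Rabs (RiemannInt p2 - l2) + Rabs (RiemannInt p2 - l1)).
{ replace (l1 - l2) with ((RiemannInt p2 - l2) - (RiemannInt p2 - l1)) by ring.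
  eapply Rle_trans; [apply Rabs_triang|]. rewrite Rabs_Ropp. lra. }
unfold eps in *. lra.
Qed.

Lemma imp_int_eq f l : is_imp_int f l -> imp_int f = l.
Proof.
intros H. unfold imp_int.
apply (is_imp_int_unique f); [|exact H].
apply epsilon_spec. now exists l.
Qed.

Lemma Eg_eq F l : IMP (fun g => gauss_density g * F g) l -> Eg F = l.
Proof. intros H. apply imp_int_eq, IMP_is_imp_int, H. Qed.

Lemma IMP_ext f g l : (forall x, f x = g x) -> IMP f l -> IMP g l.
Proof.
intros E H. replace g with f; [exact H|]. apply functional_extensionality, E.
Qed.

Lemma RInt_scalR f a b c : ex_RInt f a b -> RInt (fun x => c * f x) a b = c * RInt f a b.
Proof. intros H. apply (RInt_scal f a b c H). Qed.

Lemma RInt_plusR f g a b : ex_RInt f a b -> ex_RInt g a b ->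
  RInt (fun x => f x + g x) a b = RInt f a b + RInt g a b.
Proof. intros H1 H2. apply (RInt_plus f g a b H1 H2). Qed.

Lemma IMP_scal f l c : IMP f l -> IMP (fun x => c * f x) (c * l).
Proof.
intros [Hex H]. split.
- intros a b. apply (ex_RInt_scal f a b c (Hex a b)).
- intros eps He.
  destruct (H (eps / (Rabs c + 1))) as [M HM].
  { apply Rdiv_lt_0_compat; [lra|]. pose proof (Rabs_pos c); lra. }
  exists M. intros a b Ha Hb. rewrite RInt_scalR by apply Hex.
  replace (c * RInt f a b - c * l) with (c * (RInt f a b - l)) by ring.
  rewrite Rabs_mult. specialize (HM a b Ha Hb).
  pose proof (Rabs_pos c). pose proof (Rabs_pos (RInt f a b - l)).
  apply Rle_lt_trans with ((Rabs c + 1) * Rabs (RInt f a b - l)); [nra|].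
  apply Rmult_lt_reg_l with (/ (Rabs c + 1)). { apply Rinv_0_lt_compat; lra. }
  rewrite <- Rmult_assoc, Rinv_l by lra. unfold Rdiv in HM. lra.
Qed.

Lemma IMP_plus f g l1 l2 : IMP f l1 -> IMP g l2 -> IMP (fun x => f x + g x) (l1 + l2).
Proof.
intros [Hex1 H1] [Hex2 H2]. split.
- intros a b. apply (ex_RInt_plus f g a b (Hex1 a b) (Hex2 a b)).
- intros eps He.
  destruct (H1 (eps/2)) as [M1 HM1]; [lra|].
  destruct (H2 (eps/2)) as [M2 HM2]; [lra|].
  exists (Rmax M1 M2). intros a b Ha Hb.
  pose proof (Rmax_l M1 M2); pose proof (Rmax_r M1 M2).
  rewrite RInt_plusR by auto.
  specialize (HM1 a b ltac:(lra) ltac:(lra)). specialize (HM2 a b ltac:(lra) ltac:(lra)).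
  replace (RInt f a b + RInt g a b - (l1 + l2)) with ((RInt f a b - l1) + (RInt g a b - l2)) by ring.
  eapply Rle_lt_trans; [apply Rabs_triang|]. lra.
Qed.

Lemma ex_RInt_scalR (f : R -> R) a b c : ex_RInt f a b -> ex_RInt (fun x => c * f x) a b.
Proof. intros H. exact (ex_RInt_scal f a b c H). Qed.
Lemma ex_RInt_comp_linR (f : R -> R) u v a b : ex_RInt f (u*a+v) (u*b+v) -> ex_RInt (fun y => u * f (u*y+v)) a b.
Proof. intros H. exact (ex_RInt_comp_lin f u v a b H). Qed.
Lemma RInt_comp_linR (f : R -> R) u v a b : ex_RInt f (u*a+v) (u*b+v) -> RInt (fun y => u * f (u*y+v)) a b = RInt f (u*a+v) (u*b+v).
Proof. intros H. exact (RInt_comp_lin f u v a b H). Qed.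
Lemma ex_RInt_comp_lin' (f : R -> R) u v a b : u <> 0 -> ex_RInt f (u * a + v) (u * b + v) ->
  ex_RInt (fun y => f (u * y + v)) a b.
Proof.
intros Hu H.
apply (ex_RInt_ext (fun y => / u * (u * f (u * y + v)))).
- intros x _. change (@eq R (/ u * (u * f (u * x + v))) (f (u * x + v))). field. exact Hu.
- apply ex_RInt_scalR, ex_RInt_comp_linR, H.
Qed.

Lemma IMP_comp_lin f l u v : 0 < u -> IMP f l -> IMP (fun x => f (u * x + v)) (l / u).
Proof.
intros Hu [Hex H]. split.
- intros a b. apply ex_RInt_comp_lin'; [lra|apply Hex].
- intros eps He.
  destruct (H (eps * u)) as [M HM]; [nra|].
  exists ((Rabs M + Rabs v) / u). intros a b Ha Hb.
  assert (E' : RInt (fun y => f (u * y + v)) a b = / u * RInt f (u * a + v) (u * b + v)).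
  { rewrite <- (RInt_comp_linR f u v a b (Hex _ _)).
    rewrite <- RInt_scalR by (apply ex_RInt_comp_linR, Hex).
    apply RInt_ext. intros x _.
    change (@eq R (f (u * x + v)) (/ u * (u * f (u * x + v)))). field. lra. }
  rewrite E'.
  assert (A : u * a + v <= - M).
  { assert (u * a <= - (Rabs M + Rabs v)).
    { apply Rmult_le_compat_l with (r := u) in Ha; [|lra].
      replace (u * - ((Rabs M + Rabs v) / u)) with (- (Rabs M + Rabs v)) in Ha by (field; lra). lra. }
    pose proof (Rle_abs M); pose proof (Rle_abs v); lra. }
  assert (B : M <= u * b + v).
  { assert ((Rabs M + Rabs v) <= u * b).
    { apply Rmult_le_compat_l with (r := u) in Hb; [|lra].
      replace (u * ((Rabs M + Rabs v) / u)) with (Rabs M + Rabs v) in Hb by (field; lra). lra. }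
    pose proof (Rle_abs M); pose proof (Rle_abs (-v)); rewrite Rabs_Ropp in *; lra. }
  specialize (HM _ _ A B).
  replace (/ u * RInt f (u * a + v) (u * b + v) - l / u) with (/ u * (RInt f (u * a + v) (u * b + v) - l)) by (field; lra).
  rewrite Rabs_mult, Rabs_right by (left; apply Rinv_0_lt_compat; lra).
  apply Rmult_lt_reg_l with u; [lra|]. rewrite <- Rmult_assoc, Rinv_r by lra. lra.
Qed.

Definition gauss_bridge := MCB.gauss_bridge.

Definition g0 (t : R) : R := exp (- (t * t)).

Lemma g0_cont x : continuous g0 x.
Proof. apply (ex_derive_continuous (V:=R_NormedModule)). unfold g0. auto_derive. auto. Qed.

Lemma g0_ex a b : ex_RInt g0 a b.
Proof. apply (ex_RInt_continuous (V:=R_CompleteNormedModule)). intros; apply g0_cont. Qed.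

Lemma g0_pos x : 0 < g0 x.
Proof. apply exp_pos. Qed.

Lemma g0_le1 x : g0 x <= 1.
Proof.
unfold g0. rewrite <- exp_0. destruct (Req_dec x 0) as [->|n].
- right; f_equal; ring.
- left; apply exp_increasing. assert (0 < x * x) by (apply Rsqr_pos_lt; auto). lra.
Qed.

Lemma RInt_g0_bound x : 0 <= x -> 0 <= RInt g0 0 x <= x.
Proof.
intros Hx. split.
- replace 0 with (RInt (fun _ => 0) 0 x) at 1.
  + apply RInt_le; auto using g0_ex. apply ex_RInt_const. intros; left; apply g0_pos.
  + rewrite RInt_const. change (@eq R ((x - 0) * 0) 0). ring.
- replace x with (RInt (fun _ => 1) 0 x) at 2.
  + apply RInt_le; auto using g0_ex. apply ex_RInt_const. intros; apply g0_le1.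
  + rewrite RInt_const. change (@eq R ((x - 0) * 1) x). ring.
Qed.

Lemma RInt_g0_F : exists F : R -> R,
  (forall x, 0 < x -> RInt g0 0 x = F x) /\
  (forall e, 0 < e -> exists M, forall x, M < x -> Rabs (F x * F x - PI / 4) < e) /\
  (forall x, 0 <= x -> 0 <= F x).
Proof.
destruct gauss_bridge as [F [HD [HB HL]]].
exists F. split; [|split; [exact HL| intros x Hx; apply (HB x Hx)]].
set (D := fun x => F x - RInt g0 0 x).
assert (HdD : forall x, 0 < x -> is_derive D x 0).
{ intros x Hx. apply is_derive_Reals.
  replace 0 with (exp (- (x * x)) - g0 x) by (unfold g0; ring).
  change D with (minus_fct F (RInt g0 0)).
  apply derivable_pt_lim_minus.
  - apply HD, Hx.
  - apply is_derive_Reals.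
    apply (is_derive_RInt (V:=R_NormedModule) g0 (RInt g0 0) 0 x).
    + apply filter_forall. intros; apply (RInt_correct (V:=R_CompleteNormedModule)), g0_ex.
    + apply g0_cont. }
assert (Hc : forall x y, 0 < y -> y < x -> D y = D x).
{ intros x y Hy Hyx. apply (eq_is_derive D y x); [|exact Hyx].
  intros t Ht. apply HdD. lra. }
assert (Hb : forall x, 0 < x -> Rabs (D x) <= 2 * x).
{ intros x Hx. unfold D. destruct (HB x ltac:(lra)). destruct (RInt_g0_bound x ltac:(lra)).
  apply Rabs_le. lra. }
intros x Hx.
destruct (Req_dec (D x) 0) as [E|E]; [unfold D in E; lra|exfalso].
assert (HDx : 0 < Rabs (D x)) by (apply Rabs_pos_lt, E).
set (y := Rmin (x / 2) (Rabs (D x) / 4)).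
assert (Hy : 0 < y) by (unfold y; apply Rmin_pos; lra).
assert (Hy1 : y <= x / 2) by apply Rmin_l.
assert (Hy2 : y <= Rabs (D x) / 4) by apply Rmin_r.
specialize (Hc x y Hy ltac:(lra)). specialize (Hb y Hy). rewrite Hc in Hb. lra.
Qed.

Lemma g0_lim : forall e, 0 < e -> exists M, 0 <= M /\ forall x, M <= x ->
  Rabs (RInt g0 0 x - sqrt PI / 2) < e.
Proof.
destruct RInt_g0_F as [F [HE [HL Hp]]].
intros e He.
set (s := sqrt PI / 2).
assert (Hs : 0 < s) by (unfold s; assert (0 < sqrt PI) by (apply sqrt_lt_R0, PI_RGT_0); lra).
assert (Hs2 : s * s = PI / 4).
{ unfold s. replace (sqrt PI / 2 * (sqrt PI / 2)) with (sqrt PI * sqrt PI / 4) by field.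
  rewrite sqrt_sqrt; [reflexivity|left; apply PI_RGT_0]. }
destruct (HL (e * s)) as [M HM]; [nra|].
exists (Rmax M 0 + 1). split; [pose proof (Rmax_r M 0); lra|].
intros x Hx. pose proof (Rmax_l M 0); pose proof (Rmax_r M 0).
rewrite HE by lra. specialize (HM x ltac:(lra)). specialize (Hp x ltac:(lra)).
rewrite <- Hs2 in HM.
replace (F x * F x - s * s) with ((F x - s) * (F x + s)) in HM by ring.
rewrite Rabs_mult, (Rabs_right (F x + s)) in HM by lra.
fold s.
assert (Rabs (F x - s) * s <= Rabs (F x - s) * (F x + s)).
{ apply Rmult_le_compat_l; [apply Rabs_pos|lra]. }
apply Rmult_lt_reg_r with s; [exact Hs|]. lra.
Qed.

Lemma RInt_even (f : R -> R) : (forall x, f (- x) = f x) -> (forall a b, ex_RInt f a b) ->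
  forall a, RInt f a 0 = RInt f 0 (- a).
Proof.
intros Hf Hex a.
pose proof (RInt_comp_linR f (-1) 0 0 (-a)) as E.
replace (-1 * 0 + 0) with 0 in E by ring.
replace (-1 * - a + 0) with a in E by ring.
specialize (E (Hex _ _)).
assert (E2 : RInt (fun y => -1 * f (-1 * y + 0)) 0 (- a) = -1 * RInt f 0 (- a)).
{ rewrite <- RInt_scalR by apply Hex. apply RInt_ext. intros x _.
  replace (-1 * x + 0) with (- x) by ring. rewrite Hf. reflexivity. }
rewrite E2 in E.
rewrite <- (opp_RInt_swap (V:=R_CompleteNormedModule)) by apply Hex.
change (@eq R (- RInt f 0 a) (RInt f 0 (- a))). rewrite <- E. ring.
Qed.

Lemma IMP_g0 : IMP g0 (sqrt PI).
Proof.
split; [apply g0_ex|].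
intros eps He.
destruct (g0_lim (eps / 2)) as [M [HM0 HM]]; [lra|].
exists M. intros a b Ha Hb.
rewrite <- (RInt_Chasles (V:=R_CompleteNormedModule) g0 a 0 b) by apply g0_ex.
change (plus (RInt g0 a 0) (RInt g0 0 b)) with (RInt g0 a 0 + RInt g0 0 b).
rewrite (RInt_even g0) by (auto using g0_ex; intros; unfold g0; f_equal; ring).
pose proof (HM (- a) ltac:(lra)). pose proof (HM b Hb).
replace (RInt g0 0 (- a) + RInt g0 0 b - sqrt PI) with
  ((RInt g0 0 (- a) - sqrt PI / 2) + (RInt g0 0 b - sqrt PI / 2)) by field.
eapply Rle_lt_trans; [apply Rabs_triang|]. lra.
Qed.

Lemma C1 p r : 0 < p ->
  IMP (fun x => gauss_density x * exp (- (p - 1) / 2 * x ^ 2 + r * x))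
      (exp (r ^ 2 / (2 * p)) / sqrt p).
Proof.
intros Hp.
set (sp := sqrt p). assert (Hsp : 0 < sp) by (apply sqrt_lt_R0, Hp).
assert (Esp : sp * sp = p) by (apply sqrt_sqrt; lra).
set (s2 := sqrt 2). assert (Hs2 : 0 < s2) by (apply sqrt_lt_R0; lra).
assert (Es2 : s2 * s2 = 2) by (apply sqrt_sqrt; lra).
set (sP := sqrt PI). assert (HsP : 0 < sP) by (apply sqrt_lt_R0, PI_RGT_0).
assert (E2P : sqrt (2 * PI) = s2 * sP) by (apply sqrt_mult; [lra|left; apply PI_RGT_0]).
set (u := sp / s2). set (v := - r / (sp * s2)).
assert (Hu : 0 < u) by (unfold u; apply Rdiv_lt_0_compat; lra).
set (K := exp (r ^ 2 / (2 * p)) / sqrt (2 * PI)).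
pose proof (IMP_scal _ _ K (IMP_comp_lin g0 (sqrt PI) u v Hu IMP_g0)) as H.
replace (exp (r ^ 2 / (2 * p)) / sp) with (K * (sqrt PI / u)).
2:{ unfold K, u. rewrite E2P. fold sP sp. field. lra. }
refine (IMP_ext _ _ _ _ H).
intros x. unfold K, gauss_density, g0.
assert (Euv : u * x + v = (p * x - r) / (sp * s2)).
{ unfold u, v. rewrite <- Esp. field. lra. }
rewrite Euv.
assert (Esq : (p * x - r) / (sp * s2) * ((p * x - r) / (sp * s2)) = (p * x - r) ^ 2 / (2 * p)).
{ transitivity ((p * x - r) ^ 2 / ((sp * sp) * (s2 * s2))).
  - field. lra.
  - rewrite Esp, Es2. field. lra. }
rewrite Esq.
assert (E3 : exp (r ^ 2 / (2 * p)) * exp (- ((p * x - r) ^ 2 / (2 * p))) =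
  exp (- (x * x) / 2) * exp (- (p - 1) / 2 * x ^ 2 + r * x)).
{ rewrite <- !exp_plus. f_equal. field. lra. }
assert (Hq : 0 < sqrt (2 * PI)) by (rewrite E2P; nra).
transitivity ((exp (r ^ 2 / (2 * p)) * exp (- ((p * x - r) ^ 2 / (2 * p)))) / sqrt (2 * PI)).
{ field. lra. }
rewrite E3. field. lra.
Qed.

Lemma gd_cont x : continuous gauss_density x.
Proof. apply (ex_derive_continuous (V:=R_NormedModule)). unfold gauss_density. auto_derive. auto. Qed.

Lemma exRc (f : R -> R) a b : (forall x, continuous f x) -> ex_RInt f a b.
Proof. intros H. apply (ex_RInt_continuous (V:=R_CompleteNormedModule)). auto. Qed.

Lemma cont_mult (f g : R -> R) x : continuous f x -> continuous g x -> continuous (fun y => f y * g y) x.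
Proof. intros. apply (continuous_mult (K:=R_AbsRing)); auto. Qed.

Lemma cont_id x : continuous (fun y : R => y) x.
Proof. apply (continuous_id (U:=R_UniformSpace)). Qed.

Lemma IMP_one : IMP gauss_density 1.
Proof.
pose proof (C1 1 0 ltac:(lra)) as H.
replace (exp (0 ^ 2 / (2 * 1)) / sqrt 1) with 1 in H.
2:{ rewrite sqrt_1. replace (0 ^ 2 / (2 * 1)) with 0 by field. rewrite exp_0. field. }
refine (IMP_ext _ _ _ _ H). intros x.
replace (- (1 - 1) / 2 * x ^ 2 + 0 * x) with 0 by field. rewrite exp_0. ring.
Qed.

Lemma gd_tail eps : 0 < eps -> exists M, 0 <= M /\ forall y, M <= Rabs y ->
  gauss_density y < eps /\ Rabs y * gauss_density y < eps.
Proof.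
intros He.
exists (2 / eps + 1). split; [apply Rlt_le; apply Rplus_lt_0_compat; [apply Rdiv_lt_0_compat|]; lra|].
intros y Hy.
assert (Hy0 : 0 < Rabs y) by (assert (0 < 2 / eps) by (apply Rdiv_lt_0_compat; lra); lra).
assert (Hyy : Rabs y * Rabs y = y * y) by (rewrite <- Rabs_mult; apply Rabs_right; nra).
assert (Hex : 1 + y * y / 2 < exp (y * y / 2)).
{ apply exp_ineq1. assert (0 < y * y) by nra. lra. }
assert (Hs : 1 < sqrt (2 * PI)).
{ rewrite <- sqrt_1. apply sqrt_lt_1; [lra| |]; pose proof PI_RGT_0; pose proof PI2_3_2; lra. }
assert (Hg : gauss_density y * (1 + y * y / 2) < 1).
{ unfold gauss_density. replace (- (y * y) / 2) with (- (y * y / 2)) by field.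
  rewrite exp_Ropp.
  assert (0 < exp (y * y / 2)) by apply exp_pos.
  apply Rmult_lt_reg_r with (sqrt (2 * PI) * exp (y * y / 2)). nra.
  field_simplify; try lra. nra. }
assert (Hgp : 0 < gauss_density y) by (unfold gauss_density; apply Rdiv_lt_0_compat; [apply exp_pos|lra]).
assert (Hk : 2 / eps < Rabs y) by lra.
assert (Hk2 : 2 < eps * Rabs y).
{ apply Rmult_lt_compat_l with (r := eps) in Hk; [|lra]. field_simplify in Hk; lra. }
split.
- assert (gauss_density y * (Rabs y * Rabs y) < 2) by nra.
  assert (1 <= Rabs y) by (assert (0 < 2 / eps) by (apply Rdiv_lt_0_compat; lra); lra).
  nra.
- nra.
Qed.

Lemma IMP_antider (f G : R -> R) :
  (forall x, continuous f x) -> (forall x, is_derive G x (f x)) ->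
  (forall eps, 0 < eps -> exists M, forall y, M <= Rabs y -> Rabs (G y) < eps) ->
  IMP f 0.
Proof.
intros Hc Hd Ht. split; [intros; apply exRc, Hc|].
intros eps He. destruct (Ht (eps / 2)) as [M HM]; [lra|].
exists (Rabs M). intros a b Ha Hb.
assert (E : RInt f a b = G b - G a).
{ apply (is_RInt_unique (V:=R_CompleteNormedModule)).
  apply (is_RInt_derive (V:=R_CompleteNormedModule) G f a b); intros; auto. }
rewrite E.
assert (M <= Rabs a) by (pose proof (Rle_abs M); pose proof (Rabs_pos M); rewrite Rabs_left1; lra).
assert (M <= Rabs b) by (pose proof (Rle_abs M); pose proof (Rabs_pos M); rewrite Rabs_right; lra).
pose proof (HM a ltac:(lra)); pose proof (HM b ltac:(lra)).
replace (G b - G a - 0) with (G b + - G a) by ring.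
eapply Rle_lt_trans; [apply Rabs_triang|]. rewrite Rabs_Ropp. lra.
Qed.

Lemma gd_deriv x : is_derive gauss_density x (- x * gauss_density x).
Proof. unfold gauss_density. auto_derive; auto. simpl. 
assert (0 < sqrt (2*PI)) by (apply sqrt_lt_R0; pose proof PI_RGT_0; lra).
change RinvImpl.Rinv with Rinv. unfold Rdiv.
set (S := sqrt _) in *. replace (exp (- (x * x) * / 2)) with (exp (- (x * x) * / 2)) by reflexivity.
set (E := exp _). clearbody E. field. lra. Qed.

Lemma IMP_x : IMP (fun x => gauss_density x * x) 0.
Proof.
apply (IMP_antider _ (fun x => - gauss_density x)).
- intros; apply cont_mult; [apply gd_cont|apply cont_id].
- intros x. pose proof (gd_deriv x) as H.
  apply (is_derive_opp (K:=R_AbsRing) (V:=R_NormedModule)) in H.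
  change (opp (- x * gauss_density x)) with (- (- x * gauss_density x)) in H.
  replace (gauss_density x * x) with (- (- x * gauss_density x)) by ring. exact H.
- intros eps He. destruct (gd_tail eps He) as [M [_ HM]]. exists M. intros y Hy.
  destruct (HM y Hy). rewrite Rabs_Ropp, Rabs_right; [lra|].
  left; unfold gauss_density; apply Rdiv_lt_0_compat; [apply exp_pos|].
  apply sqrt_lt_R0; pose proof PI_RGT_0; lra.
Qed.

Lemma gd_pos y : 0 < gauss_density y.
Proof. unfold gauss_density; apply Rdiv_lt_0_compat; [apply exp_pos|].
  apply sqrt_lt_R0; pose proof PI_RGT_0; lra. Qed.

Lemma IMP_x2 : IMP (fun x => gauss_density x * x ^ 2) 1.
Proof.
assert (H0 : IMP (fun x => gauss_density x * x ^ 2 - gauss_density x) 0).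
{ apply (IMP_antider _ (fun y => - (y * gauss_density y))).
  - intros x. apply (continuous_minus (V:=R_NormedModule)).
    + apply cont_mult; [apply gd_cont|].
      apply (ex_derive_continuous (V:=R_NormedModule)). auto_derive. auto.
    + apply gd_cont.
  - intros x. apply is_derive_Reals.
    replace (gauss_density x * x ^ 2 - gauss_density x) with
      (- (1 * gauss_density x + x * (- x * gauss_density x))) by ring.
    change (fun y => - (y * gauss_density y)) with (opp_fct (mult_fct id gauss_density)).
    apply derivable_pt_lim_opp, derivable_pt_lim_mult.
    + apply derivable_pt_lim_id.
    + apply is_derive_Reals, gd_deriv.
  - intros eps He. destruct (gd_tail eps He) as [M [_ HM]]. exists M. intros y Hy.
    destruct (HM y Hy). rewrite Rabs_Ropp, Rabs_mult, (Rabs_right (gauss_density y)); [lra|].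
    left; apply gd_pos. }
pose proof (IMP_plus _ _ _ _ H0 IMP_one) as H.
replace (0 + 1) with 1 in H by ring.
refine (IMP_ext _ _ _ _ H). intros x; ring.
Qed.

Fixpoint rprod (n : nat) (f : nat -> R) : R :=
  match n with O => 1 | S n' => rprod n' f * f n' end.

Lemma rsum_ext n f g : (forall i, (i < n)%nat -> f i = g i) -> rsum n f = rsum n g.
Proof.
induction n; intros H; simpl; [reflexivity|].
rewrite IHn by (intros; apply H; lia). rewrite H by lia. reflexivity.
Qed.

Lemma rprod_ext n f g : (forall i, (i < n)%nat -> f i = g i) -> rprod n f = rprod n g.
Proof.
induction n; intros H; simpl; [reflexivity|].
rewrite IHn by (intros; apply H; lia). rewrite H by lia. reflexivity.
Qed.

Lemma exp_rsum n f : exp (rsum n f) = rprod n (fun i => exp (f i)).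
Proof. induction n; simpl; [apply exp_0|]. rewrite exp_plus, IHn. reflexivity. Qed.

Lemma rsum_plus n f g : rsum n (fun i => f i + g i) = rsum n f + rsum n g.
Proof. induction n; simpl; [ring|]. rewrite IHn; ring. Qed.

Lemma rsum_scal n c f : rsum n (fun i => c * f i) = c * rsum n f.
Proof. induction n; simpl; [ring|]. rewrite IHn; ring. Qed.

Lemma rsum_swap n k (F : nat -> nat -> R) :
  rsum n (fun i => rsum k (fun a => F a i)) = rsum k (fun a => rsum n (fun i => F a i)).
Proof.
induction n; simpl.
- induction k; simpl; [reflexivity|]. rewrite <- IHk; ring.
- rewrite IHn. rewrite <- rsum_plus. reflexivity.
Qed.

Lemma rsum_const n c : rsum n (fun _ => c) = INR n * c.
Proof. induction n; simpl; [ring|]. rewrite IHn. destruct n; simpl; ring. Qed.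

Lemma rprod_pos n f : (forall i, (i < n)%nat -> 0 < f i) -> 0 < rprod n f.
Proof. induction n; intros H; simpl; [lra|]. apply Rmult_lt_0_compat; [apply IHn; intros; apply H; lia|apply H; lia]. Qed.

Definition upd (z : nat -> R) (n : nat) (g : R) : nat -> R :=
  fun i => if Nat.eqb i n then g else z i.

Lemma Evec_S n F : Evec (S n) F = Eg (fun g => Evec n (fun z => F (upd z n g))).
Proof. reflexivity. Qed.

Lemma Evec_ext n F G : (forall z, F z = G z) -> Evec n F = Evec n G.
Proof. intros H. f_equal. apply functional_extensionality, H. Qed.

Lemma Eg_ext F G : (forall z, F z = G z) -> Eg F = Eg G.
Proof. intros H. f_equal. apply functional_extensionality, H. Qed.

Lemma Evec_prod n (phi : nat -> R -> R) (e : nat -> R) :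
  (forall i, (i < n)%nat -> IMP (fun x => gauss_density x * phi i x) (e i)) ->
  forall c, Evec n (fun z => c * rprod n (fun i => phi i (z i))) = c * rprod n e.
Proof.
induction n; intros He c.
- simpl. reflexivity.
- rewrite Evec_S.
  transitivity (Eg (fun g => (c * rprod n e) * phi n g)).
  + apply Eg_ext. intros g.
    rewrite (Evec_ext n _ (fun z => (c * phi n g) * rprod n (fun i => phi i (z i)))).
    * rewrite IHn by (intros; apply He; lia). ring.
    * intros z. simpl. unfold upd at 2. rewrite Nat.eqb_refl.
      rewrite (rprod_ext n _ (fun i => phi i (z i))); [ring|].
      intros i Hi. unfold upd. replace (Nat.eqb i n) with false; [reflexivity|].
      symmetry; apply Nat.eqb_neq; lia.
  + simpl. apply Eg_eq.
    pose proof (IMP_scal _ _ (c * rprod n e) (He n ltac:(lia))) as H.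
    rewrite Rmult_assoc in H.
    refine (IMP_ext _ _ _ _ H). intros x; ring.
Qed.

Lemma Evec_sum n (psi : nat -> R -> R) (e : nat -> R) :
  (forall i, (i < n)%nat -> IMP (fun x => gauss_density x * psi i x) (e i)) ->
  forall c, Evec n (fun z => c + rsum n (fun i => psi i (z i))) = c + rsum n e.
Proof.
induction n; intros He c.
- simpl. reflexivity.
- rewrite Evec_S.
  transitivity (Eg (fun g => (c + rsum n e) + psi n g)).
  + apply Eg_ext. intros g.
    rewrite (Evec_ext n _ (fun z => (c + psi n g) + rsum n (fun i => psi i (z i)))).
    * rewrite IHn by (intros; apply He; lia). ring.
    * intros z. simpl. unfold upd at 2. rewrite Nat.eqb_refl.
      rewrite (rsum_ext n _ (fun i => psi i (z i))); [ring|].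
      intros i Hi. unfold upd. replace (Nat.eqb i n) with false; [reflexivity|].
      symmetry; apply Nat.eqb_neq; lia.
  + simpl. apply Eg_eq.
    pose proof (IMP_plus _ _ _ _ (IMP_scal _ _ (c + rsum n e) IMP_one) (He n ltac:(lia))) as H.
    replace (c + (rsum n e + e n)) with ((c + rsum n e) * 1 + e n) by ring.
    refine (IMP_ext _ _ _ _ H). intros x; ring.
Qed.

Lemma Eg_const c : Eg (fun _ => c) = c.
Proof.
apply Eg_eq. pose proof (IMP_scal _ _ c IMP_one) as H. rewrite Rmult_1_r in H.
refine (IMP_ext _ _ _ _ H). intros x; ring.
Qed.

Lemma Evec_const n c : Evec n (fun _ => c) = c.
Proof. induction n; simpl; [reflexivity|]. rewrite IHn. apply Eg_const. Qed.

Lemma Emat_const N r c : Emat N r (fun _ => c) = c.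
Proof. induction r; simpl; [reflexivity|]. rewrite IHr. apply Evec_const. Qed.

Lemma qstep_exp (f : R -> R) A C ma s h :
  (forall y, f y = A / 2 * y ^ 2 + C) -> ma <> 0 -> 0 < 1 - ma * A * s ^ 2 ->
  exists V, 0 < V /\ IMP (fun x => gauss_density x * exp (ma * f (h + s * x))) V /\
    / ma * ln V = (A / (1 - ma * A * s ^ 2)) / 2 * h ^ 2 + (C - ln (sqrt (1 - ma * A * s ^ 2)) / ma).
Proof.
intros Hf Hm Hp.
set (p := 1 - ma * A * s ^ 2) in *.
set (r := ma * A * h * s).
assert (Hsp : 0 < sqrt p) by (apply sqrt_lt_R0, Hp).
exists (exp (ma * C + ma * A / 2 * h ^ 2) * (exp (r ^ 2 / (2 * p)) / sqrt p)).
split; [|split].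
- apply Rmult_lt_0_compat; [apply exp_pos|apply Rdiv_lt_0_compat; [apply exp_pos|exact Hsp]].
- pose proof (IMP_scal _ _ (exp (ma * C + ma * A / 2 * h ^ 2)) (C1 p r Hp)) as H.
  refine (IMP_ext _ _ _ _ H). intros x. simpl. rewrite Hf.
  rewrite <- Rmult_assoc, (Rmult_comm (exp _) (gauss_density x)), Rmult_assoc.
  f_equal. rewrite <- exp_plus. f_equal. unfold p, r. field.
- rewrite ln_mult by (first [apply exp_pos | apply Rdiv_lt_0_compat; [apply exp_pos|exact Hsp]]).
  unfold Rdiv at 2. rewrite ln_mult by (first [apply exp_pos | apply Rinv_0_lt_compat, Hsp]).
  rewrite ln_Rinv by exact Hsp. rewrite !ln_exp.
  unfold r. unfold p. field. split; [exact Hm|]. fold p. lra.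
Qed.

Lemma qstep_lin (f : R -> R) A C s h :
  (forall y, f y = A / 2 * y ^ 2 + C) ->
  IMP (fun x => gauss_density x * f (h + s * x)) (A / 2 * h ^ 2 + (C + A / 2 * s ^ 2)).
Proof.
intros Hf.
pose proof (IMP_plus _ _ _ _ (IMP_scal _ _ (A / 2 * h ^ 2 + C) IMP_one)
  (IMP_plus _ _ _ _ (IMP_scal _ _ (A * h * s) IMP_x) (IMP_scal _ _ (A / 2 * s ^ 2) IMP_x2))) as H.
replace (A / 2 * h ^ 2 + (C + A / 2 * s ^ 2)) with
  ((A / 2 * h ^ 2 + C) * 1 + (A * h * s * 0 + A / 2 * s ^ 2 * 1)) by ring.
refine (IMP_ext _ _ _ _ H). intros x. cbv beta. rewrite Hf. field.
Qed.

Definition Tsum (K : nat) (q m : nat -> R) (j : nat) : R :=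
  rsum j (fun k => m (K - k)%nat * (q (K - k)%nat - q (K - k - 1)%nat)).

Lemma q_mono K (q : nat -> R) : (forall a, (1 <= a <= K)%nat -> q (a - 1)%nat <= q a) ->
  forall i j, (i <= j <= K)%nat -> q i <= q j.
Proof.
intros Hq i j. induction j; intros Hij.
- replace i with 0%nat by lia. lra.
- destruct (Nat.eq_dec i (S j)) as [->|ne]; [lra|].
  apply Rle_trans with (q j); [apply IHj; lia|].
  pose proof (Hq (S j) ltac:(lia)) as H. replace (S j - 1)%nat with j in H by lia. exact H.
Qed.

Lemma srch_spec (q : nat -> R) qv fuel : forall c b, (c <= b <= c + fuel)%nat ->
  (forall i, (c <= i < b)%nat -> ~ qv < q i) -> ((b < c + fuel)%nat -> qv < q b) ->
  srch_lt q qv c fuel = b.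
Proof.
induction fuel; intros c b Hb Hi Hl; simpl.
- lia.
- destruct (Rlt_dec qv (q c)) as [h|h].
  + destruct (Nat.eq_dec c b) as [->|ne]; [reflexivity|].
    exfalso. apply (Hi c); [lia|exact h].
  + destruct (Nat.eq_dec c b) as [->|ne].
    * exfalso. apply h, Hl. lia.
    * apply IHfuel; [lia| |].
      -- intros i Hi'. apply Hi. lia.
      -- intros Hb'. apply Hl. lia.
Qed.

Lemma xfun_on K (q m : nat -> R) a qv :
  (forall a, (1 <= a <= K)%nat -> q (a - 1)%nat <= q a) ->
  (1 <= a <= K)%nat -> q (a - 1)%nat < qv < q a -> xfun K q m qv = m a.
Proof.
intros Hq Ha Hv. unfold xfun. f_equal.
apply srch_spec; [lia| |].
- intros i Hi Hlt.
  assert (q i <= q (a - 1)%nat) by (apply (q_mono K q Hq); lia). lra.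
- intros _. lra.
Qed.

Lemma xfun_piece K (q m : nat -> R) a :
  (forall a, (1 <= a <= K)%nat -> q (a - 1)%nat <= q a) -> (1 <= a <= K)%nat ->
  is_RInt (xfun K q m) (q (a - 1)%nat) (q a) (m a * (q a - q (a - 1)%nat)).
Proof.
intros Hq Ha.
pose proof (Hq a Ha) as Hle.
apply (is_RInt_ext (V:=R_NormedModule) (fun _ => m a)).
- intros x Hx. rewrite Rmin_left, Rmax_right in Hx by exact Hle.
  symmetry; apply (xfun_on K q m a x Hq Ha); lra.
- replace (m a * (q a - q (a - 1)%nat)) with (scal (q a - q (a - 1)%nat) (m a)).
  + apply (is_RInt_const (V:=R_NormedModule)).
  + change (@eq R ((q a - q (a - 1)%nat) * m a) (m a * (q a - q (a - 1)%nat))). ring.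
Qed.

Lemma xfun_int K (q m : nat -> R) :
  (forall a, (1 <= a <= K)%nat -> q (a - 1)%nat <= q a) ->
  forall j, (j <= K)%nat -> is_RInt (xfun K q m) (q (K - j)%nat) (q K) (Tsum K q m j).
Proof.
intros Hq j. induction j; intros Hj.
- unfold Tsum; simpl. replace (K - 0)%nat with K by lia.
  apply (is_RInt_point (V:=R_NormedModule)).
- unfold Tsum; simpl. fold (Tsum K q m j).
  pose proof (xfun_piece K q m (K - j)%nat Hq ltac:(lia)) as P.
  replace (K - j - 1)%nat with (K - S j)%nat in * by lia.
  replace (Tsum K q m j + m (K - j)%nat * (q (K - j)%nat - q (K - S j)%nat)) with
    (plus (m (K - j)%nat * (q (K - j)%nat - q (K - S j)%nat)) (Tsum K q m j)).
  + apply (is_RInt_Chasles (V:=R_NormedModule)) with (q (K - j)%nat); [exact P|apply IHj; lia].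
  + change (@eq R (m (K - j)%nat * (q (K - j)%nat - q (K - S j)%nat) + Tsum K q m j)
      (Tsum K q m j + m (K - j)%nat * (q (K - j)%nat - q (K - S j)%nat))). ring.
Qed.

Lemma Tbound beta lam K (q m : nat -> R) :
  q 0%nat = 0 ->
  (forall a, (1 <= a <= K)%nat -> q (a - 1)%nat <= q a) ->
  (forall qv, 0 <= qv <= q K ->
     forall pr : Riemann_integrable (xfun K q m) qv (q K),
       beta ^ 2 * (sigmaQ beta lam (q K)) ^ 2 * RiemannInt pr < 1) ->
  forall j, (j <= K)%nat -> beta ^ 2 * (sigmaQ beta lam (q K)) ^ 2 * Tsum K q m j < 1.
Proof.
intros H0 Hq Hx j Hj.
pose proof (xfun_int K q m Hq j Hj) as I.
assert (Ex : ex_RInt (xfun K q m) (q (K - j)%nat) (q K)) by (eexists; exact I).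
set (pr := ex_RInt_Reals_0 _ _ _ Ex).
assert (E : RiemannInt pr = Tsum K q m j).
{ rewrite <- RInt_Reals. apply (is_RInt_unique (V:=R_CompleteNormedModule)), I. }
rewrite <- E. apply Hx. split.
- rewrite <- H0. apply (q_mono K q Hq); lia.
- apply (q_mono K q Hq); lia.
Qed.

Lemma sqrt_sq x : 0 <= x -> sqrt x ^ 2 = x.
Proof. intros H. simpl. rewrite Rmult_1_r. apply sqrt_sqrt, H. Qed.

Lemma Reqb_true x y : x = y -> Reqb x y = true.
Proof. intros ->. unfold Reqb. destruct (Req_dec_T y y); [reflexivity|congruence]. Qed.

Lemma Reqb_false x y : x <> y -> Reqb x y = false.
Proof. intros H. unfold Reqb. destruct (Req_dec_T x y); [congruence|reflexivity]. Qed.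

Lemma fdown_quad beta lam K (q m : nat -> R) :
  (forall a, (1 <= a <= K)%nat -> q (a - 1)%nat <= q a) ->
  (forall j, (j <= K)%nat -> beta ^ 2 * (sigmaQ beta lam (q K)) ^ 2 * Tsum K q m j < 1) ->
  forall j, (j <= K)%nat -> exists C, forall y,
    fdown K q m beta lam j y =
      (beta ^ 2 * (sigmaQ beta lam (q K)) ^ 2 /
        (1 - beta ^ 2 * (sigmaQ beta lam (q K)) ^ 2 * Tsum K q m j)) / 2 * y ^ 2 + C.
Proof.
intros Hq HT.
set (al := beta ^ 2 * (sigmaQ beta lam (q K)) ^ 2).
induction j; intros Hj.
- exists 0. intros y.
  change (fdown K q m beta lam 0 y) with (beta ^ 2 / 2 * (sigmaQ beta lam (q K)) ^ 2 * y ^ 2).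
  replace (Tsum K q m 0) with 0 by reflexivity. unfold al. field.
- destruct (IHj ltac:(lia)) as [C HC].
  pose proof (HT j ltac:(lia)) as T1. pose proof (HT (S j) Hj) as T2. fold al in T1, T2.
  set (a := (K - j)%nat).
  assert (ES : Tsum K q m (S j) = Tsum K q m j + m a * (q a - q (a - 1)%nat)).
  { unfold Tsum at 1. simpl rsum. fold (Tsum K q m j). reflexivity. }
  assert (Hs : 0 <= q a - q (a - 1)%nat) by (pose proof (Hq a ltac:(unfold a; lia)); lra).
  set (s := sqrt (q a - q (a - 1)%nat)).
  assert (Es : s ^ 2 = q a - q (a - 1)%nat) by (apply sqrt_sq, Hs).
  set (A := al / (1 - al * Tsum K q m j)).
  change (fdown K q m beta lam (S j)) with
    (fun y => parisi_step (m a) (q a) (q (a - 1)%nat) (fdown K q m beta lam j) y).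
  unfold parisi_step. fold s.
  destruct (Req_dec (m a) 0) as [Hm|Hm].
  + rewrite Reqb_true by exact Hm.
    exists (C + A / 2 * s ^ 2). intros y.
    rewrite (Eg_eq _ _ (qstep_lin _ A C s y HC)).
    rewrite ES, Hm, Rmult_0_l, Rplus_0_r. fold A. ring.
  + rewrite Reqb_false by exact Hm.
    assert (Hp : 0 < 1 - m a * A * s ^ 2).
    { unfold A. rewrite Es.
      replace (1 - m a * (al / (1 - al * Tsum K q m j)) * (q a - q (a - 1)%nat)) with
        ((1 - al * Tsum K q m (S j)) / (1 - al * Tsum K q m j)).
      - apply Rdiv_lt_0_compat; lra.
      - rewrite ES. field. lra. }
    exists (C - ln (sqrt (1 - m a * A * s ^ 2)) / m a). intros y.
    destruct (qstep_exp _ A C (m a) s y HC Hm Hp) as [V [HV [HI HL]]].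
    rewrite (Eg_eq _ _ HI), HL. f_equal. f_equal.
    unfold A. rewrite Es, ES. field. split.
    * replace (1 - al * Tsum K q m j - m a * al * (q a - q (a - 1)%nat)) with
        (1 - al * (Tsum K q m j + m a * (q a - q (a - 1)%nat))) by ring.
      rewrite <- ES. lra.
    * lra.
Qed.

Lemma step_exp_gen (f : R -> R) A C ma s h L :
  (forall y, f y = A / 2 * y ^ 2 + C) -> ma <> 0 -> 0 < 1 - ma * A * s ^ 2 ->
  IMP (fun x => gauss_density x * exp (ma * (L + f (h + s * x))))
      (exp (ma * (L + / ma * ln (Eg (fun g => exp (ma * f (h + s * g))))))).
Proof.
intros Hf Hm Hp.
destruct (qstep_exp f A C ma s h Hf Hm Hp) as [V [HV [HI _]]].
rewrite (Eg_eq _ _ HI).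
replace (exp (ma * (L + / ma * ln V))) with (exp (ma * L) * V).
- pose proof (IMP_scal _ _ (exp (ma * L)) HI) as H.
  refine (IMP_ext _ _ _ _ H). intros x. cbv beta.
  rewrite <- Rmult_assoc, (Rmult_comm (exp (ma * L))), Rmult_assoc, <- exp_plus. f_equal. f_equal. ring.
- replace (ma * (L + / ma * ln V)) with (ma * L + ln V) by (field; exact Hm).
  rewrite exp_plus, exp_ln by exact HV. reflexivity.
Qed.

Lemma step_lin_gen (f : R -> R) A C s h L :
  (forall y, f y = A / 2 * y ^ 2 + C) ->
  IMP (fun x => gauss_density x * (L + f (h + s * x))) (L + Eg (fun g => f (h + s * g))).
Proof.
intros Hf.
pose proof (qstep_lin f A C s h Hf) as HI. rewrite (Eg_eq _ _ HI).
pose proof (IMP_plus _ _ _ _ (IMP_scal _ _ L IMP_one) HI) as H.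
rewrite Rmult_1_r in H.
refine (IMP_ext _ _ _ _ H). intros x. cbv beta. ring.
Qed.

Definition hv (q : nat -> R) (a : nat) (Js : nat -> nat -> R) (i : nat) : R :=
  rsum a (fun b => sqrt (q (S b) - q b) * Js (S b) i).

Lemma hv_upd q a Js (g : nat -> R) i : (1 <= a)%nat ->
  hv q a (fun b i => if Nat.eqb b a then g i else Js b i) i =
  hv q (a - 1) Js i + sqrt (q a - q (a - 1)%nat) * g i.
Proof.
intros Ha. destruct a as [|a']; [lia|].
replace (S a' - 1)%nat with a' by lia.
unfold hv. simpl rsum. rewrite Nat.eqb_refl. f_equal.
apply rsum_ext. intros b Hb. simpl. destruct (Nat.eqb_spec b a'); [lia|reflexivity].
Qed.

Lemma rsum_scal_r n c f : rsum n (fun i => f i * c) = rsum n f * c.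
Proof. induction n; simpl; [ring|]. rewrite IHn; ring. Qed.

Lemma Hint_0 N K q beta lam J Js z :
  Hint N K q beta lam 0 J Js z =
  rsum N (fun i => - ((1 - lam + beta ^ 2 * q K) - 1) / 2 * z i ^ 2 + (beta * hv q K Js i) * z i).
Proof.
unfold Hint. cbv zeta.
replace (0 / (2 * INR N)) with 0 by (unfold Rdiv; ring). rewrite sqrt_0.
replace (1 - 0) with 1 by ring. rewrite sqrt_1.
assert (E : rsum K (fun a => sqrt (q (S a) - q a) * rsum N (fun i => Js (S a) i * z i)) =
            rsum N (fun i => hv q K Js i * z i)).
{ transitivity (rsum K (fun a => rsum N (fun i => sqrt (q (S a) - q a) * (Js (S a) i * z i)))).
  - apply rsum_ext. intros a _. symmetry. apply rsum_scal.
  - rewrite <- rsum_swap. apply rsum_ext. intros i _. unfold hv.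
    rewrite <- rsum_scal_r. apply rsum_ext. intros b _. ring. }
rewrite E. rewrite rsum_plus.
rewrite (rsum_ext N (fun i => - ((1 - lam + beta ^ 2 * q K) - 1) / 2 * z i ^ 2)
   (fun i => (- ((1 - lam + beta ^ 2 * q K) - 1) / 2) * (z i * z i))) by (intros; ring).
rewrite rsum_scal.
rewrite (rsum_ext N (fun i => beta * hv q K Js i * z i) (fun i => beta * (hv q K Js i * z i))) by (intros; ring).
rewrite rsum_scal.
replace (0 * beta ^ 2 / (4 * INR N)) with 0 by (unfold Rdiv; ring).
field.
Qed.

Lemma Ztilde_val N K q m beta lam J Js : 0 < 1 - lam + beta ^ 2 * q K ->
  Ztilde N K q beta lam 0 J Js =
  exp (rsum N (fun i => ln (sigmaQ beta lam (q K)) + fdown K q m beta lam 0 (hv q K Js i))).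
Proof.
intros HP.
unfold Ztilde.
rewrite (Evec_ext N _ (fun z => 1 * rprod N (fun i =>
   (fun i x => exp (- ((1 - lam + beta ^ 2 * q K) - 1) / 2 * x ^ 2 + (beta * hv q K Js i) * x)) i (z i)))).
2:{ intros z. rewrite Hint_0, exp_rsum. ring. }
rewrite (Evec_prod N (fun i x => exp (- ((1 - lam + beta ^ 2 * q K) - 1) / 2 * x ^ 2 + (beta * hv q K Js i) * x)) (fun i => exp ((beta * hv q K Js i) ^ 2 / (2 * (1 - lam + beta ^ 2 * q K))) / sqrt (1 - lam + beta ^ 2 * q K))).
2:{ intros i _. apply C1, HP. }
rewrite Rmult_1_l, exp_rsum. apply rprod_ext. intros i _.
change (fdown K q m beta lam 0 (hv q K Js i)) with
  (beta ^ 2 / 2 * (sigmaQ beta lam (q K)) ^ 2 * (hv q K Js i) ^ 2).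
assert (Hs : 0 < sqrt (1 - lam + beta ^ 2 * q K)) by (apply sqrt_lt_R0, HP).
assert (Hsig : 0 < sigmaQ beta lam (q K)) by (unfold sigmaQ; apply Rinv_0_lt_compat, Hs).
rewrite exp_plus, exp_ln by exact Hsig.
assert (E2 : sigmaQ beta lam (q K) ^ 2 = / (1 - lam + beta ^ 2 * q K)).
{ unfold sigmaQ. rewrite pow_inv, sqrt_sq by lra. reflexivity. }
rewrite E2. unfold sigmaQ.
replace ((beta * hv q K Js i) ^ 2 / (2 * (1 - lam + beta ^ 2 * q K))) with
  (beta ^ 2 / 2 * / (1 - lam + beta ^ 2 * q K) * hv q K Js i ^ 2) by (field; lra).
unfold Rdiv. apply Rmult_comm.
Qed.

Lemma Zlev_val beta lam K (q m : nat -> R) N :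
  (forall a, (1 <= a <= K)%nat -> q (a - 1)%nat <= q a) ->
  (forall j, (j <= K)%nat -> beta ^ 2 * (sigmaQ beta lam (q K)) ^ 2 * Tsum K q m j < 1) ->
  0 < 1 - lam + beta ^ 2 * q K ->
  forall j, (j <= K)%nat -> forall J Js,
  Zlev N K q m beta lam 0 j J Js =
  exp (rsum N (fun i => ln (sigmaQ beta lam (q K)) + fdown K q m beta lam j (hv q (K - j) Js i))).
Proof.
intros Hq HT HP j. induction j; intros Hj J Js.
- change (Zlev N K q m beta lam 0 0 J Js) with (Ztilde N K q beta lam 0 J Js).
  rewrite Nat.sub_0_r. apply Ztilde_val, HP.
- set (al := beta ^ 2 * (sigmaQ beta lam (q K)) ^ 2) in *.
  destruct (fdown_quad beta lam K q m Hq HT j ltac:(lia)) as [C HC]. fold al in HC.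
  set (A := al / (1 - al * Tsum K q m j)) in HC.
  pose proof (HT j ltac:(lia)) as T1. pose proof (HT (S j) Hj) as T2. fold al in T1, T2.
  set (a := (K - j)%nat).
  assert (Ha : (1 <= a <= K)%nat) by (unfold a; lia).
  assert (ES : Tsum K q m (S j) = Tsum K q m j + m a * (q a - q (a - 1)%nat)).
  { unfold Tsum at 1. simpl rsum. fold (Tsum K q m j). reflexivity. }
  assert (Hs : 0 <= q a - q (a - 1)%nat) by (pose proof (Hq a Ha); lra).
  set (s := sqrt (q a - q (a - 1)%nat)).
  assert (Es : s ^ 2 = q a - q (a - 1)%nat) by (apply sqrt_sq, Hs).
  set (L := ln (sigmaQ beta lam (q K))).
  replace (K - S j)%nat with (a - 1)%nat by (unfold a; lia).
  set (h := fun i => hv q (a - 1) Js i).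
  assert (Fd : forall y, fdown K q m beta lam (S j) y =
     parisi_step (m a) (q a) (q (a - 1)%nat) (fdown K q m beta lam j) y) by reflexivity.
  change (Zlev N K q m beta lam 0 (S j) J Js) with
    (if Reqb (m a) 0 then exp (Evec N (fun g => ln (Zlev N K q m beta lam 0 j J
        (fun b i => if Nat.eqb b a then g i else Js b i))))
     else Rpower (Evec N (fun g => Rpower (Zlev N K q m beta lam 0 j J
        (fun b i => if Nat.eqb b a then g i else Js b i)) (m a))) (/ m a)).
  destruct (Req_dec (m a) 0) as [Hm|Hm].
  + rewrite Reqb_true by exact Hm.
    rewrite (Evec_ext N _ (fun g => 0 + rsum N (fun i =>
       (fun i x => L + fdown K q m beta lam j (h i + s * x)) i (g i)))).
    2:{ intros g. rewrite IHj by lia. rewrite ln_exp, Rplus_0_l.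
        apply rsum_ext. intros i _. fold a. rewrite hv_upd by lia. reflexivity. }
    rewrite (Evec_sum N (fun i x => L + fdown K q m beta lam j (h i + s * x))
       (fun i => L + fdown K q m beta lam (S j) (h i))).
    2:{ intros i _. rewrite Fd. unfold parisi_step. rewrite Reqb_true by exact Hm.
        apply (step_lin_gen _ A C). exact HC. }
    rewrite Rplus_0_l. reflexivity.
  + rewrite Reqb_false by exact Hm.
    assert (Hp : 0 < 1 - m a * A * s ^ 2).
    { unfold A. rewrite Es.
      replace (1 - m a * (al / (1 - al * Tsum K q m j)) * (q a - q (a - 1)%nat)) with
        ((1 - al * Tsum K q m (S j)) / (1 - al * Tsum K q m j)).
      - apply Rdiv_lt_0_compat; lra.
      - rewrite ES. field. lra. }
    rewrite (Evec_ext N _ (fun g => 1 * rprod N (fun i =>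
       (fun i x => exp (m a * (L + fdown K q m beta lam j (h i + s * x)))) i (g i)))).
    2:{ intros g. rewrite IHj by lia. unfold Rpower. rewrite ln_exp.
        rewrite <- rsum_scal, exp_rsum, Rmult_1_l.
        apply rprod_ext. intros i _. cbv beta. fold a. rewrite hv_upd by lia. reflexivity. }
    rewrite (Evec_prod N (fun i x => exp (m a * (L + fdown K q m beta lam j (h i + s * x))))
       (fun i => exp (m a * (L + fdown K q m beta lam (S j) (h i))))).
    2:{ intros i _. rewrite Fd. unfold parisi_step. rewrite Reqb_false by exact Hm.
        apply (step_exp_gen _ A C); assumption. }
    rewrite Rmult_1_l. unfold Rpower.
    rewrite <- exp_rsum, ln_exp, rsum_scal. f_equal. field. exact Hm.
Qed.

Theorem mainTheorem14 (beta lam : R) (K : nat) (q m : nat -> R) (N : nat) :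
  0 < beta ->
  (1 <= K)%nat ->
  q 0%nat = 0 ->
  (forall a, (1 <= a <= K)%nat -> q (a - 1)%nat <= q a) ->
  0 <= m 1%nat ->
  (forall a, (1 <= a < K)%nat -> m a <= m (S a)) ->
  m K <= 1 ->
  0 < 1 - lam + beta ^ 2 * q K ->
  (forall qv, 0 <= qv <= q K ->
     forall pr : Riemann_integrable (xfun K q m) qv (q K),
       beta ^ 2 * (sigmaQ beta lam (q K)) ^ 2 * RiemannInt pr < 1) ->
  (0 < N)%nat ->
  phiN N K q m beta lam 0 = ln (sigmaQ beta lam (q K)) + parisi_f K q m beta lam 0 0.
Proof.
intros Hb HK H0 Hq Hm1 Hmm HmK HP Hx HN.
pose proof (Tbound beta lam K q m H0 Hq Hx) as HT.
unfold phiN.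
set (X := ln (sigmaQ beta lam (q K)) + fdown K q m beta lam K 0).
assert (EZ : forall J, ln (Zlev N K q m beta lam 0 K J (fun _ _ => 0)) = INR N * X).
{ intros J. rewrite (Zlev_val beta lam K q m N Hq HT HP K (le_n K)).
  rewrite ln_exp. rewrite Nat.sub_diag. unfold hv. simpl rsum. apply rsum_const. }
replace (fun J => ln (Zlev N K q m beta lam 0 K J (fun _ _ => 0))) with (fun _ : nat -> nat -> R => INR N * X)
  by (apply functional_extensionality; intros J; symmetry; apply EZ).
rewrite Emat_const.
assert (HNr : INR N <> 0) by (apply not_0_INR; lia).
replace (/ INR N * (INR N * X)) with X by (field; exact HNr).
unfold X. f_equal.
destruct K as [|K']; [lia|].
unfold parisi_f.
assert (Hs : srch_le q 0 1 (S K' - 1) = 1%nat).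
{ destruct (S K' - 1)%nat; simpl; [reflexivity|].
  destruct (Rle_dec 0 (q 1%nat)) as [_|nn]; [reflexivity|].
  exfalso. apply nn. pose proof (Hq 1%nat ltac:(lia)) as h. simpl in h. lra. }
cbv zeta. rewrite Hs.
replace (S K' - 1)%nat with K' by lia.
change (fdown (S K') q m beta lam (S K') 0) with
  (parisi_step (m (S K' - K')%nat) (q (S K' - K')%nat) (q (S K' - K' - 1)%nat) (fdown (S K') q m beta lam K') 0).
replace (S K' - K')%nat with 1%nat by lia. simpl (1 - 1)%nat. rewrite H0. reflexivity.
Qed.
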